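(* Let $(\Sigma,\theta)$ be a topological space, let $G(X)=\{\star\}+\Sigma\times X$ on $\mathbf{Set}$, whose initial algebra is $\Sigma^*$ with $\delta(\star)=\varepsilon$ and $\delta(a,w)=aw$, and let $T$ be its lift to $\mathbf{Top}$ given by $T(X)=\{\star\}+\Sigma\times X$ with the coproduct and product topologies. Then the divisibility topology on $\Sigma^*$ associated to $G$ (and $T$) is the subword topology on $\Sigma^*$.
   Context: For an analytic functor $G$ with initial algebra $(\mu G,\delta)$, $\mathrm{supp}(y)$ for $y\in G(Y)$ is the image $f(X)$ of a weak normal form $f:(X,x)\to(Y,y)$ in the category of elements of $G$; for this $G$, $\mathrm{supp}(a,w)=\{w\}$ and $\mathrm{supp}(\star)=\emptyset$. The substructure ordering $\sqsubseteq$ on $\mu G$ is the reflexive–transitive closure of ''$a\in\mathrm{supp}(\delta^{-1}(b))$'' (here: the suffix ordering). The divisibility topology is the least fixed point of the map sending a topology $\tau$ on $\mu G$ to the topology generated by $\{\uparrow_\sqsubseteq\delta(V):V\text{ open in }T(\mu G,\tau)\}$. The subword topology on $\Sigma^*$ is generated by the sets $\Sigma^*U_1\Sigma^*\cdots\Sigma^*U_n\Sigma^*$ with $U_i\in\theta$. *)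

(* Defs.v *)
From Stdlib Require Import List Relations.
Import ListNotations.
Set Implicit Arguments.

Definition set (X : Type) := X -> Prop.

Definition is_topology (X : Type) (tau : set (set X)) : Prop :=
  tau (fun _ => True) /\
  (forall (I : Type) (F : I -> set X),
      (forall i, tau (F i)) -> tau (fun x => exists i, F i x)) /\
  (forall U V, tau U -> tau V -> tau (fun x => U x /\ V x)).

Definition generated_topology (X : Type) (B : set (set X)) : set (set X) :=
  fun U => forall tau, is_topology tau -> (forall V, B V -> tau V) -> tau U.

Definition product_topology (A B : Type) (tA : set (set A)) (tB : set (set B))
  : set (set (A * B)) :=
  fun W => forall p, W p -> exists U V, tA U /\ tB V /\ U (fst p) /\ V (snd p) /\
                            (forall a b, U a -> V b -> W (a, b)).

(* Coproduct topology on unit + Y, {star} carrying the unique (discrete) topology. *)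
Definition coproduct_unit_topology (Y : Type) (tY : set (set Y))
  : set (set (unit + Y)) :=
  fun W => tY (fun y => W (inr y)).

Definition T_topology (Sigma X : Type) (theta : set (set Sigma)) (tau : set (set X))
  : set (set (unit + Sigma * X)) :=
  coproduct_unit_topology (product_topology theta tau).

Definition delta (Sigma : Type) (t : unit + Sigma * list Sigma) : list Sigma :=
  match t with
  | inl _ => []
  | inr (a, w) => a :: w
  end.

(* "v in supp(delta^{-1}(u))": supp(a,w) = {w}, supp(star) = {}. *)
Definition supp_rel (Sigma : Type) (v u : list Sigma) : Prop :=
  exists t, delta t = u /\ match t with inl _ => False | inr (_, w) => w = v end.

Definition substructure (Sigma : Type) : relation (list Sigma) :=
  clos_refl_trans (list Sigma) (@supp_rel Sigma).

Definition upset (Sigma : Type) (A : set (list Sigma)) : set (list Sigma) :=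
  fun u => exists v, A v /\ substructure v u.

Definition delta_image (Sigma : Type) (V : set (unit + Sigma * list Sigma))
  : set (list Sigma) :=
  fun v => exists t, V t /\ delta t = v.

Definition div_step (Sigma : Type) (theta : set (set Sigma)) (tau : set (set (list Sigma)))
  : set (set (list Sigma)) :=
  generated_topology
    (fun U => exists V, T_topology theta tau V /\ U = upset (delta_image V)).

Definition is_least_fixed_point (X : Type) (Phi : set (set X) -> set (set X))
  (tau : set (set X)) : Prop :=
  (forall U, Phi tau U <-> tau U) /\
  (forall sigma, (forall U, Phi sigma U <-> sigma U) -> forall U, tau U -> sigma U).

Definition is_divisibility_topology (Sigma : Type) (theta : set (set Sigma))
  (tau : set (set (list Sigma))) : Prop :=
  is_least_fixed_point (div_step theta) tau.

Fixpoint subword_pattern (Sigma : Type) (Us : list (set Sigma)) (w : list Sigma) : Prop :=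
  match Us with
  | [] => True
  | U :: Us' => exists x a z, w = x ++ a :: z /\ U a /\ subword_pattern Us' z
  end.

Definition subword_topology (Sigma : Type) (theta : set (set Sigma))
  : set (set (list Sigma)) :=
  generated_topology
    (fun S => exists Us, (forall U, In U Us -> theta U) /\ S = subword_pattern Us).

(* Main.v *)
Require Import Defs.
From Stdlib Require Import List Relations.
From Stdlib Require Import FunctionalExtensionality PropExtensionality.
Import ListNotations.

Lemma set_ext (X : Type) (A B : set X) : (forall x, A x <-> B x) -> A = B.
Proof.
  intro H; apply functional_extensionality; intro x;
  apply propositional_extensionality; apply H.
Qed.

Lemma gen_top (X : Type) (B : set (set X)) : is_topology (generated_topology B).
Proof.
  split; [|split].
  - intros tau Ht _; apply Ht.
  - intros I F HF tau Ht HB. apply Ht. intro i. apply HF; auto.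
  - intros U V HU HV tau Ht HB. apply Ht; [apply HU|apply HV]; auto.
Qed.

Lemma gen_incl (X : Type) (B : set (set X)) V : B V -> generated_topology B V.
Proof. intros HV tau _ HB; auto. Qed.

Lemma suffix_sub (S : Type) (v u : list S) : substructure v u <-> exists x, u = x ++ v.
Proof.
  split.
  - intro H; induction H.
    + destruct H as [t [Ht Hm]]. destruct t as [[]|[a w]]; [contradiction|].
      simpl in *; subst. exists [a]; reflexivity.
    + exists []; reflexivity.
    + destruct IHclos_refl_trans1 as [x1 ->]. destruct IHclos_refl_trans2 as [x2 ->].
      exists (x2 ++ x1). now rewrite app_assoc.
  - intros [x ->]. induction x.
    + apply rt_refl.
    + eapply rt_trans; [apply IHx|]. apply rt_step. exists (inr (a, x ++ v)); auto.
Qed.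

Lemma pat_prefix (S : Type) (Us : list (set S)) z y :
  subword_pattern Us z -> subword_pattern Us (y ++ z).
Proof.
  destruct Us as [|U Us]; simpl; auto.
  intros [x [a [z' [-> [Ha Hz]]]]]. exists (y ++ x), a, z'. rewrite <- app_assoc; auto.
Qed.

Lemma pat_inv (S : Type) U R (a : S) w :
  subword_pattern (U :: R) (a :: w) -> (U a /\ subword_pattern R w) \/ subword_pattern (U :: R) w.
Proof.
  simpl. intros [x [b [z [E [Hb Hz]]]]]. destruct x as [|c x].
  - simpl in E; injection E; intros; subst; auto.
  - simpl in E; injection E; intros; subst. right. exists x, b, z; auto.
Qed.

Arguments pat_inv {S U R a w}.
Arguments pat_prefix {S Us z} y.
Section Merge.
Variable (Sigma : Type) (theta : set (set Sigma)).
Hypothesis Ht : is_topology theta.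
Definition allopen (Us : list (set Sigma)) := forall U, In U Us -> theta U.

Lemma allopen_cons U Us : theta U -> allopen Us -> allopen (U :: Us).
Proof. intros H1 H2 V [<-|HV]; auto. Qed.

Lemma allopen_tl U Us : allopen (U :: Us) -> allopen Us.
Proof. intros H V HV; apply H; right; auto. Qed.
Lemma allopen_hd U Us : allopen (U :: Us) -> theta U.
Proof. intros H; apply H; left; auto. Qed.

Arguments allopen_tl {U Us}.
Arguments allopen_hd {U Us}.
Lemma merge w : forall Us1 Us2, allopen Us1 -> allopen Us2 ->
  subword_pattern Us1 w -> subword_pattern Us2 w ->
  exists Us, allopen Us /\ subword_pattern Us w /\
    (forall v, subword_pattern Us v -> subword_pattern Us1 v) /\
    (forall v, subword_pattern Us v -> subword_pattern Us2 v).
Proof.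
  induction w as [|a w IH]; intros Us1 Us2 O1 O2 P1 P2.
  - destruct Us1 as [|U1 R1].
    2:{ destruct P1 as [x [b [z [E _]]]]. destruct x; discriminate. }
    exists Us2; repeat split; simpl; auto.
  - destruct Us1 as [|U1 R1]. { exists Us2; repeat split; simpl; auto. }
    destruct Us2 as [|U2 R2]. { exists (U1 :: R1); repeat split; simpl; auto. }
    destruct (pat_inv P1) as [[A1 Q1]|Q1]; destruct (pat_inv P2) as [[A2 Q2]|Q2].
    + destruct (IH R1 R2 (allopen_tl O1) (allopen_tl O2) Q1 Q2) as [Us [O [Pw [I1 I2]]]].
      exists ((fun x => U1 x /\ U2 x) :: Us). repeat split.
      * apply allopen_cons; auto. apply Ht; [eapply allopen_hd; eauto|eapply allopen_hd; eauto].
      * exists [], a, w; simpl; auto.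
      * intros v [x [b [z [-> [[Hb1 Hb2] Hz]]]]]. exists x, b, z; auto.
      * intros v [x [b [z [-> [[Hb1 Hb2] Hz]]]]]. exists x, b, z; auto.
    + destruct (IH R1 (U2 :: R2) (allopen_tl O1) O2 Q1 Q2) as [Us [O [Pw [I1 I2]]]].
      exists (U1 :: Us). repeat split.
      * apply allopen_cons; auto. eapply allopen_hd; eauto.
      * exists [], a, w; simpl; auto.
      * intros v [x [b [z [-> [Hb Hz]]]]]. exists x, b, z; auto.
      * intros v [x [b [z [-> [Hb Hz]]]]]. specialize (I2 z Hz). apply (pat_prefix (x ++ [b])) in I2.
        rewrite <- app_assoc in I2; exact I2.
    + destruct (IH (U1 :: R1) R2 O1 (allopen_tl O2) Q1 Q2) as [Us [O [Pw [I1 I2]]]].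
      exists (U2 :: Us). repeat split.
      * apply allopen_cons; auto. eapply allopen_hd; eauto.
      * exists [], a, w; simpl; auto.
      * intros v [x [b [z [-> [Hb Hz]]]]]. specialize (I1 z Hz). apply (pat_prefix (x ++ [b])) in I1.
        rewrite <- app_assoc in I1; exact I1.
      * intros v [x [b [z [-> [Hb Hz]]]]]. exists x, b, z; auto.
    + destruct (IH _ _ O1 O2 Q1 Q2) as [Us [O [Pw [I1 I2]]]].
      exists Us; repeat split; auto. apply (pat_prefix [a]) in Pw; exact Pw.
Qed.

Arguments merge {w Us1 Us2}.
Definition local (W : set (list Sigma)) := forall w, W w -> exists Us, allopen Us /\
  subword_pattern Us w /\ forall v, subword_pattern Us v -> W v.

Lemma local_top : is_topology local.
Proof.
  split; [|split].
  - intros w _. exists []; repeat split; auto. intros U [].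
  - intros I F HF w [i Hi]. destruct (HF i w Hi) as [Us [O [P Q]]].
    exists Us; repeat split; auto. intros v Hv; exists i; auto.
  - intros U V HU HV w [Hu Hv].
    destruct (HU w Hu) as [Us1 [O1 [P1 Q1]]]. destruct (HV w Hv) as [Us2 [O2 [P2 Q2]]].
    destruct (merge O1 O2 P1 P2) as [Us [O [P [I1 I2]]]].
    exists Us; repeat split; auto.
Qed.

Lemma sub_local W : subword_topology theta W <-> local W.
Proof.
  split.
  - intro H. apply H. apply local_top.
    intros V [Us [O ->]] w Hw. exists Us; auto.
  - intro H.
    assert (E : W = fun x => exists i : {Us | allopen Us /\ forall v, subword_pattern Us v -> W v},
                 subword_pattern (proj1_sig i) x).
    { apply set_ext; intro x; split.
      - intro Hx. destruct (H x Hx) as [Us [O [P Q]]]. exists (exist _ Us (conj O Q)); auto.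
      - intros [[Us [O Q]] P]; simpl in P; auto. }
    rewrite E. intros tau Htau HB. apply Htau. intros [Us [O Q]]. apply HB. exists Us; auto.
Qed.
End Merge.

Definition consV (Sigma : Type) (U : set Sigma) Us : set (unit + Sigma * list Sigma) :=
  fun t => match t with inl _ => False | inr (a, w) => U a /\ subword_pattern Us w end.

Lemma pat_step (Sigma : Type) (theta : set (set Sigma)) (tau : set (set (list Sigma))) U Us :
  theta U -> tau (subword_pattern Us) -> div_step theta tau (subword_pattern (U :: Us)).
Proof.
  intros HU HUs.
  assert (E : subword_pattern (U :: Us) = upset (delta_image (@consV Sigma U Us))).
  { apply set_ext; intro u; split.
    - intros [x [a [z [-> [Ha Hz]]]]]. exists (a :: z). split.
      + exists (inr (a, z)); simpl; auto.
      + apply suffix_sub; eauto.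
    - intros [v [[t [Vt Et]] Hs]]. apply suffix_sub in Hs. destruct Hs as [x ->].
      destruct t as [[]|[a w]]; [contradiction|]. simpl in *; subst.
      destruct Vt. exists x, a, w; auto. }
  rewrite E. apply gen_incl. exists (@consV Sigma U Us); split; auto.
  intros [a w] [Ha Hw]. exists U, (subword_pattern Us); simpl; repeat split; auto.
Qed.

Theorem mainTheorem16 (Sigma : Type) (theta : set (set Sigma)) :
  is_topology theta ->
  is_divisibility_topology theta (subword_topology theta).
Proof.
  intro Ht. split.
  - intro U; split.
    + intro H. apply H. apply gen_top.
      intros V [W [HW ->]]. apply sub_local; auto.
      intros u [v [[t [Vt Et]] Hs]]. apply suffix_sub in Hs. destruct Hs as [x ->].
      destruct t as [[]|[a w]].
      * simpl in Et; subst. exists []; repeat split.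
        -- intros ? [].
        -- intros u _. exists []; split; [exists (inl tt); auto|]. apply suffix_sub.
           exists u; rewrite app_nil_r; auto.
      * simpl in Et; subst.
        destruct (HW (a, w) Vt) as [U0 [W0 [HU0 [HW0 [Ha [Hw Hr]]]]]]. simpl in *.
        apply sub_local in HW0; auto.
        destruct (HW0 w Hw) as [Us [O [P Q]]].
        exists (U0 :: Us); repeat split.
        -- apply allopen_cons; auto.
        -- exists x, a, w; auto.
        -- intros v [y [b [z [-> [Hb Hz]]]]]. exists (b :: z); split.
           ++ exists (inr (b, z)); split; [apply Hr; auto | reflexivity].
           ++ apply suffix_sub; eauto.
    + intro H. apply H. apply gen_top.
      intros V [Us [O ->]]. induction Us as [|U0 Us IH].
      * apply gen_top.
      * apply pat_step. { apply O; left; auto. }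
        apply gen_incl. exists Us; split; auto. intros V HV; apply O; right; auto.
  - intros sigma Hs U HU. apply (proj1 (Hs U)). apply (HU (div_step theta sigma)).
    + apply gen_top.
    + intros V [Us [O ->]]. induction Us as [|U0 Us IH].
      * apply gen_top.
      * apply pat_step. { apply O; left; auto. }
        apply (proj1 (Hs _)). exact (IH (fun V HV => O V (or_intror HV))).
Qed.
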